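(* Let $(X,\tau)$ be an extended locally convex space. Then there exists a locally convex topology $\tau_F$ on $X$ with the following properties: (a) $\tau_F\subseteq\tau$; (b) if $\sigma$ is any locally convex topology on $X$ with $\sigma\subseteq\tau$, then $\sigma\subseteq\tau_F$.
   Context: Let $X$ be a vector space over $\mathbb{R}$ or $\mathbb{C}$. An extended seminorm on $X$ is a map $\rho:X\to[0,\infty]$ with $\rho(\alpha x)=|\alpha|\rho(x)$ for all scalars $\alpha$ and $x\in X$ (with $0\cdot\infty=0$), and $\rho(x+y)\le\rho(x)+\rho(y)$. An extended locally convex space (elcs) is a pair $(X,\tau)$ where $\tau$ is the topology on $X$ induced by some family $\{\rho_i\}_{i\in I}$ of extended seminorms, i.e. a neighborhood base at each $x_0\in X$ is formed by the sets $\{x:\max_{i\in J}\rho_i(x-x_0)<\varepsilon\}$, $J\subseteq I$ finite, $\varepsilon>0$. (This is equivalent to the Salas–García definition: a group topology that is the supremum of a family of ''fundamental'' extended locally convex topologies, each making $X$ topologically the product of a locally convex subspace and a discrete subspace.) A locally convex topology on $X$ is a topology induced in the same way by a family of finite-valued seminorms (Hausdorffness not assumed). *)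

(* Defs.v *)
From HB Require Import structures.
From mathcomp Require Import all_boot all_order all_algebra.
From mathcomp Require Import complex.
From mathcomp Require Import all_classical all_reals.

Set Implicit Arguments. Unset Strict Implicit. Unset Printing Implicit Defensive.
Import Order.TTheory GRing.Theory Num.Theory.
Local Open Scope ring_scope.
Local Open Scope classical_set_scope.

Definition scal (R : realType) (b : bool) : numFieldType :=
  if b then (R : numFieldType) else ((R[i])%C : numFieldType).

Section ElcsDefs.
Context {K : numFieldType} {X : lmodType K}.

(* An extended seminorm X -> [0, +oo]; values are taken in \bar K and
   required to be nonnegative (for K = C these are exactly [0,+oo]). *)
Definition ext_seminorm (rho : X -> \bar K) : Prop :=
  (forall x, (0 <= rho x)%E) /\
  (forall (a : K) (x : X), rho (a *: x) = (`|a|%:E * rho x)%E) /\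
  (forall x y : X, (rho (x + y)%R <= rho x + rho y)%E).

Definition seminorm (p : X -> K) : Prop := ext_seminorm (fun x => (p x)%:E).

Definition induced_open {I : Type} (rho : I -> X -> \bar K) : set (set X) :=
  [set U | forall x0, U x0 -> exists (J : set I) (e : K),
      [/\ finite_set J, 0 < e &
          [set x | forall i, J i -> (rho i (x - x0)%R < e%:E)%E] `<=` U]].

Definition elc_topology (tau : set (set X)) : Prop :=
  exists (I : Type) (rho : I -> X -> \bar K),
    (forall i, ext_seminorm (rho i)) /\ tau = induced_open rho.

Definition lc_topology (sigma : set (set X)) : Prop :=
  exists (I : Type) (p : I -> X -> K),
    (forall i, seminorm (p i)) /\ sigma = induced_open (fun i x => (p i x)%:E).

End ElcsDefs.

(* Main.v *)
Require Import Defs.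
From HB Require Import structures.
From mathcomp Require Import all_boot all_order all_algebra.
From mathcomp Require Import complex.
From mathcomp Require Import all_classical all_reals.
Local Open Scope classical_set_scope.

Set Implicit Arguments. Unset Strict Implicit. Unset Printing Implicit Defensive.
Import Order.TTheory GRing.Theory Num.Theory.

Lemma fin_cap (T U : Type) (N : set U -> Prop) (B : T -> set U) (A : set T) :
  (forall V W, V `<=` W -> N V -> N W) -> N setT ->
  (forall V W, N V -> N W -> N (V `&` W)) -> finite_set A ->
  (forall p, A p -> N (B p)) -> N (fun x => forall p, A p -> B p x).
Proof.
move=> mono NT NI /(@finite_seqP {classic T}) [s ->].
elim: s => [|a s IH] H.
  by apply: mono NT => x _ p /=; rewrite in_nil.
have Na : N (B a) by apply: H; rewrite /= in_cons eqxx.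
have Ns : N (fun x => forall p, p \in s -> B p x).
  by apply: IH => p ps; apply: H; rewrite /= in_cons ps orbT.
apply: mono (NI _ _ Na Ns) => x [Bx Sx] p /=; rewrite in_cons.
by case/orP => [/eqP -> //| ps]; apply: Sx.
Qed.

Section Gen.
Context {K : numFieldType} {X : lmodType K}.
Local Open Scope ring_scope.

Definition Nb {I : Type} (rho : I -> X -> \bar K) (x0 : X) (V : set X) :=
  exists (J : set I) (e : K),
      [/\ finite_set J, 0 < e &
          [set x | forall i, J i -> (rho i (x - x0)%R < e%:E)%E] `<=` V].

Lemma Nb_mono I (rho : I -> X -> \bar K) x0 V W : V `<=` W -> Nb rho x0 V -> Nb rho x0 W.
Proof.
move=> VW [J [e [fJ e0 sub]]]; exists J, e; split => //.
by move=> x hx; apply: VW; apply: sub.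
Qed.

Lemma Nb_T I (rho : I -> X -> \bar K) x0 : Nb rho x0 setT.
Proof. by exists set0, 1; split. Qed.

Lemma Nb_I I (rho : I -> X -> \bar K) x0 V W :
  Nb rho x0 V -> Nb rho x0 W -> Nb rho x0 (V `&` W).
Proof.
move=> [J1 [e1 [f1 e10 s1]]] [J2 [e2 [f2 e20 s2]]].
have [le12|lt21] := real_leP (gtr0_real e10) (gtr0_real e20).
- exists (J1 `|` J2), e1; split => //; first by rewrite finite_setU.
  move=> x hx; split.
    by apply: s1 => i Ji; apply: hx; left.
  apply: s2 => i Ji; apply: (lt_le_trans (hx i (or_intror Ji))).
  by rewrite lee_fin.
- exists (J1 `|` J2), e2; split => //; first by rewrite finite_setU.
  move=> x hx; split; last first.
    by apply: s2 => i Ji; apply: hx; right.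
  apply: s1 => i Ji; apply: (lt_le_trans (hx i (or_introl Ji))).
  by rewrite lee_fin ltW.
Qed.

Lemma seminorm0 (p : X -> K) : seminorm p -> p 0 = 0.
Proof.
move=> [_ [h _]]; have := h 0 0; rewrite scale0r normr0 mul0e.
by case.
Qed.

Lemma open_ball I (q : I -> X -> K) (i : I) (x0 : X) (e : K) :
  (forall i, seminorm (q i)) -> 0 < e ->
  induced_open (fun i x => (q i x)%:E) [set x | ((q i (x - x0))%:E < e%:E)%E].
Proof.
move=> hq e0 x1 /= h1; exists [set i], (e - q i (x1 - x0)); split => //.
  by rewrite subr_gt0 -lte_fin.
move=> x /= hx; have := hx i erefl; rewrite !lte_fin ltrBrDr => h.
have [_ [_ tri]] := hq i.
have := tri (x - x1) (x1 - x0); rewrite -EFinD lee_fin addrA subrK => h2.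
exact: le_lt_trans h2 h.
Qed.

Lemma main_gen (tau : set (set X)) :
  elc_topology tau ->
  exists tauF : set (set X),
    [/\ lc_topology tauF,
        tauF `<=` tau &
        forall sigma : set (set X), lc_topology sigma -> sigma `<=` tau -> sigma `<=` tauF].
Proof.
move=> [I [rho [hrho ->]]].
pose Iset := {p : X -> K | seminorm p /\ forall x0 e, 0 < e ->
   induced_open rho [set x | ((p (x - x0))%:E < e%:E)%E]}.
exists (induced_open (fun (p : Iset) x => ((sval p) x)%:E)); split.
- exists Iset, (fun p => sval p); split => //.
  by case=> p [].
- move=> U hU x0 Ux0.
  have [J [e [fJ e0 sub]]] := hU x0 Ux0.
  apply: (@Nb_mono _ rho x0 _ _ sub).
  pose B := fun p : Iset => [set x | ((sval p (x - x0))%:E < e%:E)%E].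
  have := @fin_cap Iset X (Nb rho x0) B J (@Nb_mono _ rho x0) (Nb_T rho x0)
    (@Nb_I _ rho x0) fJ.
  apply.
  move=> p _; have [sp op] := svalP p.
  apply: (op x0 e e0 x0) => /=.
  by rewrite subrr seminorm0 // lte_fin.
- move=> sigma [I' [q [hq ->]]] hsub U hU x0 Ux0.
  have [J [e [fJ e0 sub]]] := hU x0 Ux0.
  have mk : forall i, seminorm (q i) /\ forall x0 e, 0 < e ->
      induced_open rho [set x | ((q i (x - x0))%:E < e%:E)%E].
    move=> i; split => // y e' e'0; apply: hsub; exact: open_ball.
  exists ((fun i => exist _ (q i) (mk i) : Iset) @` J), e; split => //.
    exact: finite_image.
  move=> x hx; apply: sub => i Ji.
  by apply: (hx (exist _ (q i) (mk i))); exists i.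
Qed.

End Gen.

Theorem theorem3p2 (R : realType) (b : bool) (X : lmodType (scal R b))
  (tau : set (set X)) :
  elc_topology tau ->
  exists tauF : set (set X),
    [/\ lc_topology tauF,
        tauF `<=` tau &
        forall sigma : set (set X), lc_topology sigma -> sigma `<=` tau -> sigma `<=` tauF].
Proof. exact: main_gen. Qed.
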